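(* Let $(A,B)$ be a Katsura pair such that $A$ has no zero rows, and let $(\mathbb{Z}\times E_A^0,E_A)$ be the associated action-restriction pair. Then its contraction coefficient is $$\rho=\limsup_{n\to\infty}\left(\max_{\mu\in E_A^n}\frac{|B_\mu|}{A_\mu}\right)^{1/n}.$$
   Context: Katsura pair: $N\in\mathbb{N}$, $A\in M_N(\mathbb{N})$ (nonnegative integers), $B\in M_N(\mathbb{Z})$ with $A_{ij}=0\Rightarrow B_{ij}=0$. Graph $E_A$: vertices $\{1,\dots,N\}$, edges $e_{i,j,m}$ ($0\le m<A_{ij}$), $r=i$, $s=j$; $E_A^n$ paths $\mu_1\cdots\mu_n$ of length $n$ with $s(\mu_t)=r(\mu_{t+1})$. For $\mu=e_{i_0,i_1,r_1}\cdots e_{i_{n-1},i_n,r_n}$, $A_\mu=\prod_tA_{i_ti_{t+1}}$, $B_\mu=\prod_tB_{i_ti_{t+1}}$. The action-restriction pair $(\mathbb{Z}\times E_A^0,E_A)$: the group bundle with elements $a_i^k$ ($a_i^ka_i^l=a_i^{k+l}$, domain = codomain $=i$) acts by $a_i^k\cdot e_{i,j,m}=e_{i,j,\hat m}$, $a_i^k|_{e_{i,j,m}}=a_j^{\hat k}$, $kB_{ij}+m=\hat kA_{ij}+\hat m$, $0\le\hat m<A_{ij}$, extended to paths by $g\cdot(e\nu)=(g\cdot e)(g|_e\cdot\nu)$, $g|_{e\nu}=(g|_e)|_\nu$. Contraction coefficient: for a finitely generated groupoid $G$ with finite symmetric generating set $S$ and word length $\ell_S$, acting via an action-restriction pair on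 a finite graph $E$, $\rho=\limsup_{n\to\infty}\left(\limsup_{g\in G,\ \ell_S(g)\to\infty}\max_{\mu\in d(g)E^n}\frac{\ell_S(g|_\mu)}{\ell_S(g)}\right)^{1/n}$ (it does not depend on $S$). For $\mathbb{Z}\times E_A^0$ one may take $S=\{a_i^{\pm1}\}$, so $\ell_S(a_i^k)=|k|$, and $\rho=\limsup_n\left(\limsup_{m\to\infty}\max_{\mu\in E_A^n}\frac{\ell_S(a^m_{r(\mu)}|_\mu)}{m}\right)^{1/n}$. *)

(* Defs.v *)
From HB Require Import structures.
From mathcomp Require Import all_boot all_order all_algebra.
From mathcomp Require Import all_classical all_reals all_analysis.
Set Implicit Arguments. Unset Strict Implicit. Unset Printing Implicit Defensive.
Import Order.TTheory GRing.Theory Num.Theory.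
Local Open Scope classical_set_scope.
Local Open Scope ring_scope.

Section Katsura.
Variable N : nat.
Variable A : 'M[nat]_N.
Variable B : 'M[int]_N.

Definition katsura_pair : Prop := forall i j, A i j = 0%N -> B i j = 0.

Definition no_zero_rows : Prop := forall i : 'I_N, exists j : 'I_N, (0 < A i j)%N.

(* A path of E_A is given by its range vertex r(mu) = i_0 and the list of its
   edges after the start: the t-th step (i_{t+1}, m_{t+1}) represents the edge
   e_{i_t, i_{t+1}, m_{t+1}}.  The empty list is the vertex i_0 (length 0). *)
Fixpoint is_path (i : 'I_N) (s : seq ('I_N * nat)) : bool :=
  if s is (j, m) :: s' then (m < A i j)%N && is_path j s' else true.

Definition paths_from (n : nat) (i : 'I_N) : set (seq ('I_N * nat)) :=
  [set s | is_path i s /\ size s = n].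

(* Restriction a_i^k |_{e_{i,j,m}} = a_j^{khat}, with
   k B_ij + m = khat A_ij + mhat, 0 <= mhat < A_ij (Euclidean division). *)
Definition edge_restr (i j : 'I_N) (m : nat) (k : int) : int :=
  ((k * B i j + m%:Z) %/ (A i j)%:Z)%Z.

(* g|_{e nu} = (g|_e)|_nu : exponent of a_{r(mu)}^k |_mu. *)
Fixpoint path_restr (i : 'I_N) (k : int) (s : seq ('I_N * nat)) : int :=
  if s is (j, m) :: s' then path_restr j (edge_restr i j m k) s' else k.

(* Word length with respect to S = {a_i^{+-1}}:  l_S(a_i^k) = |k|. *)
Definition wlen (k : int) : nat := `|k|%N.

Variable R : realType.
Local Open Scope ereal_scope.

Definition max_ratio (n : nat) (i : 'I_N) (k : int) : \bar R :=
  ereal_sup [set ((wlen (path_restr i k s))%:R / (wlen k)%:R)%R%:E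
            | s in paths_from n i].

(* limsup_{g in G, l_S(g) -> oo} max_ratio n g
   = inf_K sup { max_ratio n g | l_S(g) >= K }. *)
Definition inner_limsup (n : nat) : \bar R :=
  ereal_inf [set ereal_sup [set max_ratio n g.1 g.2
                           | g in [set g : 'I_N * int | (K <= wlen g.2)%N]]
            | K in [set: nat]].

Definition contraction_coeff : \bar R :=
  limn_esup (fun n : nat => poweR (inner_limsup n) (n%:R^-1)%R).

Fixpoint A_path (i : 'I_N) (s : seq ('I_N * nat)) : nat :=
  if s is (j, _) :: s' then (A i j * A_path j s')%N else 1%N.
Fixpoint B_path (i : 'I_N) (s : seq ('I_N * nat)) : int :=
  if s is (j, _) :: s' then (B i j * B_path j s')%R else 1%R.

Definition max_BA (n : nat) : \bar R :=
  ereal_sup [set x : \bar R | exists (i : 'I_N) (s : seq ('I_N * nat)),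
     paths_from n i s /\ x = ((`|B_path i s|%:~R : R) / (A_path i s)%:R)%R%:E].

End Katsura.

(* Main.v *)
Require Import Defs.
From HB Require Import structures.
From mathcomp Require Import all_boot all_order all_algebra.
From mathcomp Require Import all_classical all_reals all_analysis.
From mathcomp Require Import zify ring lra.
Import Order.TTheory GRing.Theory Num.Theory.
Local Open Scope ring_scope.
Set Implicit Arguments. Unset Strict Implicit.

Section Helpers.
Variables (R : realType) (N : nat) (A : 'M[nat]_N) (B : 'M[int]_N).

Definition rr (i : 'I_N) (s : seq ('I_N * nat)) : R :=
  (B_path B i s)%:~R / (A_path A i s)%:R.

Lemma A_path_gt0 i s : is_path A i s -> (0 < A_path A i s)%N.
Proof.
elim: s i => [|[j m] s IH] i //= /andP[Hm Hp].
rewrite muln_gt0 (IH _ Hp) andbT; lia.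
Qed.

Lemma bound_B : exists b : nat, forall i j, (`|B i j| <= b)%N.
Proof.
exists (\max_i \max_j `|B i j|%N) => i j.
apply: leq_trans (leq_bigmax (F := fun j => `|B i j|%N) j) _.
exact: (leq_bigmax (F := fun i => \max_j `|B i j|%N) i).
Qed.

Lemma B_path_le b i s : (forall i j, (`|B i j| <= b)%N) ->
  (`|B_path B i s| <= b ^ size s)%N.
Proof.
move=> Hb; elim: s i => [|[j m] s IH] i //=.
rewrite abszM expnS; apply: leq_mul => //.
Qed.

Lemma edge_err i j m k : (m < A i j)%N ->
  `|(edge_restr A B i j m k)%:~R - k%:~R * (B i j)%:~R / (A i j)%:R| < (1 : R).
Proof.
move=> Hm.
set a := A i j.
have a0 : (0 < a)%N by lia.
set q := edge_restr A B i j m k.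
have Hint : `|q * a%:Z - k * B i j| < a%:Z.
  have := divz_eq (k * B i j + m%:Z) a%:Z.
  have := modz_ge0 (k * B i j + m%:Z) (d := a%:Z) ltac:(rewrite eqz_nat; lia).
  have := ltz_mod (k * B i j + m%:Z) (d := a%:Z) ltac:(rewrite eqz_nat; lia).
  rewrite /q /edge_restr.
  set r := ((_ %% _)%Z); set d := ((_ %/ _)%Z) => H1 H2 H3.
  move: H1; rewrite -[`|a%:Z|]/(a%:Z) => H1.
  rewrite ltr_norml; apply/andP; split; lia.
have aR : (0 : R) < a%:R by rewrite ltr0n.
have -> : (q%:~R - k%:~R * (B i j)%:~R / a%:R : R) = (q * a%:Z - k * B i j)%:~R / a%:R.
  rewrite intrD intrM intrN intrM /=. field. by rewrite lt0r_neq0.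
rewrite normrM normfV (gtr0_norm aR) ltr_pdivrMr // mul1r -intr_norm.
by rewrite -[a%:R]/((a%:Z)%:~R) ltr_int.
Qed.

Lemma rr_cons i j m s : is_path A i ((j, m) :: s) ->
  rr i ((j, m) :: s) = (B i j)%:~R / (A i j)%:R * rr j s.
Proof.
move=> /= /andP[Hm Hp]; rewrite /rr /= intrM natrM.
have h1 : (A i j)%:R != (0 : R) by rewrite pnatr_eq0; lia.
have h2 : (A_path A j s)%:R != (0 : R) by rewrite pnatr_eq0 -lt0n A_path_gt0.
by field; apply/andP.
Qed.

Lemma rr_le b i s : (forall i j, (`|B i j| <= b)%N) -> is_path A i s ->
  `|rr i s| <= (b ^ size s)%:R.
Proof.
move=> Hb Hp; rewrite /rr normrM normfV -intr_norm -natr_absz.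
have h := A_path_gt0 Hp.
rewrite (gtr0_norm (_ : (0:R) < _)) ?ltr0n // ler_pdivrMr ?ltr0n //.
apply: (le_trans (y := (b ^ size s)%:R)); first by rewrite ler_nat B_path_le.
by rewrite -natrM ler_nat leq_pmulr.
Qed.

Lemma err_bound n : exists C : R, 0 <= C /\ forall i s k, is_path A i s -> size s = n ->
  `|(path_restr A B i k s)%:~R - k%:~R * rr i s| <= C.
Proof.
have [b Hb] := bound_B.
elim: n => [|n [C [C0 HC]]].
  exists 0; split => // i [|x s] k //= _ _.
  by rewrite /rr /= divr1 mulr1 subrr normr0.
exists (C + (b ^ n)%:R); split; first by rewrite addr_ge0 ?ler0n.
move=> i [|[j m] s] k //= Hp [Hs].
rewrite (rr_cons Hp); move: Hp => /= /andP[Hm Hp].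
set q := edge_restr A B i j m k.
have E := edge_err k Hm.
have H1 := HC j s q Hp Hs.
have H2 := rr_le (i:=j) Hb Hp; rewrite Hs in H2.
have -> : (path_restr A B j q s)%:~R - k%:~R * ((B i j)%:~R / (A i j)%:R * rr j s) =
   ((path_restr A B j q s)%:~R - q%:~R * rr j s) +
   (q%:~R - k%:~R * (B i j)%:~R / (A i j)%:R) * rr j s :> R by ring.
apply: (le_trans (ler_normD _ _)); apply: lerD => //.
rewrite normrM -[X in _ <= X]mul1r; apply: ler_pM => //; exact: ltW.
Qed.

Lemma rr_norm i s : is_path A i s ->
  `|rr i s| = (`|B_path B i s|%:~R : R) / (A_path A i s)%:R.
Proof.
move=> Hp; have h := A_path_gt0 Hp.
rewrite /rr normrM normfV -intr_norm (gtr0_norm (_ : (0:R) < _)) ?ltr0n //.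
Qed.

Lemma wlenE (k : int) : ((wlen k)%:R : R) = `|k%:~R|.
Proof. by rewrite /wlen natr_absz intr_norm. Qed.

Lemma ratio_bounds (C : R) i s k :
  `|(path_restr A B i k s)%:~R - k%:~R * rr i s| <= C -> k != 0 ->
  (`|rr i s| - C / `|k%:~R| <= ((wlen (path_restr A B i k s))%:R / (wlen k)%:R : R)) /\ 
  (((wlen (path_restr A B i k s))%:R / (wlen k)%:R : R) <= `|rr i s| + C / `|k%:~R|).
Proof.
move=> HC k0; rewrite !wlenE.
set P : R := (path_restr A B i k s)%:~R; set kr : R := k%:~R.
have kk : 0 < `|kr| by rewrite normr_gt0 /kr intr_eq0.
have U : `|P| <= `|kr| * `|rr i s| + C.
  have h := ler_normD (P - kr * rr i s) (kr * rr i s); rewrite subrK in h.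
  by rewrite -normrM; apply: le_trans h _; rewrite addrC lerD2l.
have L : `|kr| * `|rr i s| - C <= `|P|.
  rewrite -normrM lerBlDr; apply: (le_trans _ (lerD (lexx `|P|) HC)).
  have := ler_normD P (kr * rr i s - P).
  by rewrite addrC subrK distrC.
split.
  rewrite ler_pdivlMr //.
  have -> : (`|rr i s| - C / `|kr|) * `|kr| = `|kr| * `|rr i s| - C.
    by field; rewrite lt0r_neq0.
  done.
rewrite ler_pdivrMr //.
have -> : (`|rr i s| + C / `|kr|) * `|kr| = `|kr| * `|rr i s| + C.
  by field; rewrite lt0r_neq0.
done.
Qed.

Lemma inner_eq n : inner_limsup A B R n = max_BA A B R n.
Proof.
have [C [C0 HC]] := err_bound n.
apply/eqP; rewrite eq_le; apply/andP; split.
- apply/lee_addgt0Pr => e e0.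
  set K := (Num.truncn (C / e)).+1.
  apply: le_trans (ereal_inf_lbound _) _; first by exists K.
  apply: ge_ereal_sup => x [[i k] /= HK <-].
  apply: ge_ereal_sup => y [s [Hp Hs] <-].
  have k0 : k != 0.
    apply/negP => /eqP k0; move: HK; rewrite k0 /wlen /=; lia.
  have [_ Hr] := ratio_bounds (HC i s k Hp Hs) k0.
  apply: (le_trans (y := (`|rr i s| + e)%:E)).
    rewrite lee_fin; apply: le_trans Hr _; rewrite lerD2l.
    have kp : 0 < `|k%:~R : R| by rewrite normr_gt0 intr_eq0.
    rewrite ler_pdivrMr // mulrC -ler_pdivrMr //.
    apply: ltW; apply: lt_le_trans (truncnS_gt (C / e)) _.
    by rewrite -wlenE ler_nat.
  rewrite EFinD leeD2r //; apply: ereal_sup_ubound.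
  by exists i, s; split => //; rewrite rr_norm.
- apply: ge_ereal_sup => x [i [s [[Hp Hs] ->]]].
  rewrite -rr_norm //.
  apply: le_ereal_inf_tmp => y [K _ <-].
  apply/lee_addgt0Pr => e e0.
  set k : int := Posz (K + (Num.truncn (C / e)).+1).
  have k0 : k != 0 by rewrite /k; apply/eqP => -[]; lia.
  have [Hr _] := ratio_bounds (HC i s k Hp Hs) k0.
  set q := ((wlen (path_restr A B i k s))%:R / (wlen k)%:R : R) in Hr *.
  apply: (le_trans (y := (q + e)%:E)).
    rewrite lee_fin -lerBlDr; apply: le_trans Hr; rewrite lerD2l lerN2.
    have kp : 0 < `|k%:~R : R| by rewrite normr_gt0 intr_eq0.
    rewrite ler_pdivrMr // mulrC -ler_pdivrMr //.
    apply: ltW; apply: lt_le_trans (truncnS_gt (C / e)) _.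
    rewrite -wlenE ler_nat /wlen /k /=. by rewrite addnS ltnS leq_addl.
  rewrite EFinD leeD2r //.
  apply: (le_trans (y := max_ratio A B R n i k)).
    by apply: ereal_sup_ubound; exists s.
  apply: ereal_sup_ubound; exists (i, k) => //=.
  rewrite /wlen /k /=; lia.
Qed.

End Helpers.

Theorem proposition3p4 (R : realType) (N : nat) (A : 'M[nat]_N) (B : 'M[int]_N) :
  (0 < N)%N -> katsura_pair A B -> no_zero_rows A ->
  contraction_coeff A B R =
  limn_esup (fun n : nat => poweR (max_BA A B R n) (n%:R^-1)).
Proof.
move=> _ _ _; rewrite /contraction_coeff.
congr limn_esup; apply: funext => n.
by rewrite inner_eq.
Qed.
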